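(* Let $a\in\mathbb{R}$, $\sigma>0$, $\gamma>0$, $\lambda>0$, $T\ge1$, channel transition probabilities $p_{cc'}$, and let $V_t$, $t=0,\ldots,T$, be defined on $\mathbb{R}\times\{0,1\}$ by the value iteration in the context. Then for each $c\in\{0,1\}$ and $t\in\{0,1,\ldots,T\}$, $V_t(\Delta,c)$ depends on $\Delta$ only through $|\Delta|$ and is non-decreasing in $|\Delta|$.
   Context: $p_{01},p_{10}\in[0,1]$, $p_{00}=1-p_{01}$, $p_{11}=1-p_{10}$; $\psi(v)=e^{-v^2/(2\sigma^2)}$. Value iteration (for minimizing $\mathbb{E}\exp(\gamma\sum_t(\lambda u(t)+(1-u(t)c(t))\Delta(t)^2))$ for an estimation error $\Delta$ over a two-state Markov channel): $V_0\equiv1$, $Q_{t+1}(\Delta,c;0)=e^{\gamma\Delta^2}\sum_{c_+\in\{0,1\}}p_{cc_+}\int_{\mathbb{R}}\psi(\Delta_+-a\Delta)V_t(\Delta_+,c_+)d\Delta_+$, $Q_{t+1}(\Delta,c;1)=(1-c)e^{\gamma(\lambda+\Delta^2)}\sum_{c_+}p_{cc_+}\int_{\mathbb{R}}\psi(\Delta_+-a\Delta)V_t(\Delta_+,c_+)d\Delta_++c\,e^{\gamma\lambda}\sum_{c_+}p_{cc_+}\int_{\mathbb{R}}\psi(\Delta_+)V_t(\Delta_+,c_+)d\Delta_+$, $V_{t+1}(\Delta,c)=\min_{u\in\{0,1\}}Q_{t+1}(\Delta,c;u)$. *)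

(* Defs.v *)
From HB Require Import structures.
From mathcomp Require Import all_boot all_order all_algebra.
From mathcomp Require Import all_classical all_reals all_analysis.
Set Implicit Arguments. Unset Strict Implicit. Unset Printing Implicit Defensive.
Import Order.TTheory GRing.Theory Num.Theory.
Local Open Scope ring_scope.
Local Open Scope ereal_scope.

Section ValueIteration.
Variable R : realType.

Definition psi (sigma v : R) : R := expR (- (v ^+ 2) / (2 * sigma ^+ 2))%R.

(* channel transition probabilities; state 1 is encoded as true, 0 as false *)
Definition ptrans (p01 p10 : R) (c c' : bool) : R :=
  match c, c' with
  | false, false => (1 - p01)%R
  | false, true => p01
  | true, false => p10
  | true, true => (1 - p10)%R
  end.

Definition expect (sigma p01 p10 : R) (W : R -> bool -> \bar R) (m : R) (c : bool)
  : \bar R :=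
  (ptrans p01 p10 c false)%:E *
     \int[lebesgue_measure]_(x in [set: R]) ((psi sigma (x - m))%:E * W x false)
  + (ptrans p01 p10 c true)%:E *
     \int[lebesgue_measure]_(x in [set: R]) ((psi sigma (x - m))%:E * W x true).

Definition Q0 (a sigma gamma p01 p10 : R) (W : R -> bool -> \bar R)
  (d : R) (c : bool) : \bar R :=
  (expR (gamma * d ^+ 2))%:E * expect sigma p01 p10 W (a * d) c.

(* (1-c) e^{gamma(lambda+d^2)} ... + c e^{gamma lambda} ..., written by cases on c *)
Definition Q1 (a sigma gamma lambda p01 p10 : R) (W : R -> bool -> \bar R)
  (d : R) (c : bool) : \bar R :=
  if c then (expR (gamma * lambda))%:E * expect sigma p01 p10 W 0 c
  else (expR (gamma * (lambda + d ^+ 2)))%:E * expect sigma p01 p10 W (a * d) c.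

Definition Vstep (a sigma gamma lambda p01 p10 : R) (W : R -> bool -> \bar R)
  : R -> bool -> \bar R :=
  fun d c => mine (Q0 a sigma gamma p01 p10 W d c)
                  (Q1 a sigma gamma lambda p01 p10 W d c).

Fixpoint V (a sigma gamma lambda p01 p10 : R) (t : nat) : R -> bool -> \bar R :=
  match t with
  | O => fun _ _ => 1
  | S t' => Vstep a sigma gamma lambda p01 p10 (V a sigma gamma lambda p01 p10 t')
  end.

End ValueIteration.

(* Main.v *)
Require Import Defs.
From HB Require Import structures.
From mathcomp Require Import all_boot all_order all_algebra.
From mathcomp Require Import all_classical all_reals all_analysis.
From mathcomp Require Import measurable_realfun lra ring.
Import Order.TTheory GRing.Theory Num.Theory.
Local Open Scope ring_scope.
Local Open Scope classical_set_scope.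
Section S.
Variable R : realType.
Local Notation mu := (@lebesgue_measure R).

Lemma mrefl (k : R) : measurable_fun [set: measurableTypeR R] ((fun x : R => k - x) : measurableTypeR R -> measurableTypeR R).
Proof. by apply: measurable_funD => //; apply: measurableT_comp => //. Qed.

Lemma lebesgue_measure_refl (k : R) (A : set R) : measurable A ->
  pushforward mu (fun x : R => (k - x : measurableTypeR R)) A = mu A.
Proof.
move=> mA; apply/esym/lebesgue_measure_unique => //=; first exact: mrefl.
move=> _ _ [[a b]] _ <-.
rewrite /pushforward.
have -> : (fun x : R => k - x) @^-1` `]a, b]%classic = `[k - b, k - a[%classic.
  apply/seteqP; split => x /=; rewrite !in_itv /= => /andP[h1 h2];
  apply/andP; split; lra.
rewrite !lebesgue_measure_itv /= !lte_fin ltrD2l ltrN2.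
case: ifP => // _; rewrite -!EFinD; congr EFin; lra.
Qed.

Local Open Scope ereal_scope.
Lemma int_refl (k : R) (D : set R) (g : R -> \bar R) : measurable D ->
  measurable_fun setT g -> (forall x, 0 <= g x) ->
  \int[mu]_(x in D) g x = \int[mu]_(x in (fun x => k - x)%R @^-1` D) g (k - x)%R.
Proof.
move=> mD mg g0.
have := @ge0_integral_pushforward _ _ _ _ _ _ (mrefl k) lebesgue_measure D g mD.
rewrite /comp => <- //.
- apply: eq_measure_integral; first exact: mrefl.
  move=> mf A mA _; symmetry; exact: lebesgue_measure_refl.
- exact: measurable_funS mg.
Qed.

Definition good (h : R -> \bar R) :=
  (forall x, 0 <= h x) /\ (forall x y : R, (`|x| <= `|y|)%R -> h x <= h y).

Lemma good_meas (h : R -> \bar R) : (forall x y : R, (`|x| <= `|y|)%R -> h x <= h y) ->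
  measurable_fun setT h.
Proof.
move=> hm.
apply: (measurability _ (ErealGenCInfty.measurableE R)) => //.
move=> _ [_ [r ->] <-]; rewrite setTI.
set S := h @^-1` _.
have -> : S = (S `&` [set x | 0 <= x]%R) `|` (S `&` [set x | x <= 0]%R).
  apply/seteqP; split => x; last by case=> -[].
  move=> Sx; have [x0|x0] := leP 0%R x; [left|right; split => //; exact: ltW].
  by split.
apply: measurableU; apply: is_interval_measurable.
- move=> x y [Sx x0] [Sy y0] z /andP[xz zy]; split; last exact: le_trans xz.
  move: Sx; rewrite /S /= !in_itv /= !andbT => Sx.
  apply: le_trans Sx _; apply: hm.
  by rewrite !ger0_norm //; exact: le_trans xz.
- move=> x y [Sx x0] [Sy y0] z /andP[xz zy]; split; last exact: le_trans zy _.
  move: Sy; rewrite /S /= !in_itv /= !andbT => Sy.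
  apply: le_trans Sy _; apply: hm.
  by rewrite !ler0_norm ?lerN2 //; exact: le_trans zy _.
Qed.

Lemma sq_of_abs (u v : R) : (`|u| <= `|v|)%R -> (u ^+ 2 <= v ^+ 2)%R.
Proof.
move=> h; rewrite -(real_normK (num_real u)) -(real_normK (num_real v)).
by rewrite ler_sqr ?nnegrE.
Qed.

Lemma abs_of_sq (u v : R) : (u ^+ 2 <= v ^+ 2)%R -> (`|u| <= `|v|)%R.
Proof.
rewrite -(real_normK (num_real u)) -(real_normK (num_real v)).
by rewrite ler_sqr ?nnegrE.
Qed.

Variable sigma : R.

Lemma psi_even v : psi sigma (- v) = psi sigma v.
Proof. by rewrite /psi sqrrN. Qed.

Lemma psi_ge0 v : (0 <= psi sigma v)%R.
Proof. exact/ltW/expR_gt0. Qed.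

Lemma psi_le u v : (`|u| <= `|v|)%R -> (psi sigma v <= psi sigma u)%R.
Proof.
move=> h; rewrite /psi ler_expR !mulNr lerN2 ler_wpM2r //.
  by rewrite invr_ge0 mulr_ge0 // sqr_ge0.
exact: sq_of_abs.
Qed.

Lemma mpsi m : measurable_fun setT (fun x : R => (psi sigma (x - m))%:E).
Proof.
apply/measurable_EFinP; rewrite /psi.
apply: measurableT_comp; first exact: measurable_expR.
apply: measurable_funM => //.
apply: measurable_funN.
apply: measurable_funX.
by apply: measurable_funB.
Qed.

Definition F (h : R -> \bar R) (m : R) :=
  \int[mu]_(x in [set: R]) ((psi sigma (x - m))%:E * h x).

Lemma mint (h : R -> \bar R) (m : R) : measurable_fun setT h ->
  measurable_fun setT (fun x : R => (psi sigma (x - m))%:E * h x).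
Proof. move=> mh; exact: emeasurable_funM (mpsi m) mh. Qed.

Lemma mcomp (h : R -> \bar R) (k : R) : measurable_fun setT h ->
  measurable_fun setT (fun x : R => h (k - x)%R).
Proof. move=> mh; apply: measurableT_comp => //; exact: mrefl. Qed.


Lemma mT (D : set R) (f : R -> \bar R) : measurable_fun setT f -> measurable_fun D f.
Proof. by move=> mf; apply: measurable_funS mf => //. Qed.

Lemma mint2 (h : R -> \bar R) (m k : R) : measurable_fun setT h ->
  measurable_fun setT (fun x : R => (psi sigma (k - x - m))%:E * h (k - x)%R).
Proof. by move=> mh; exact: (mcomp _ k (mint _ m mh)). Qed.

Lemma F_split (h : R -> \bar R) (m k : R) : measurable_fun setT h ->
  (forall x, 0 <= h x) ->
  F h m = \int[mu]_(x in `]-oo, (k / 2)%R[)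
     ((psi sigma (x - m))%:E * h x + (psi sigma (k - x - m))%:E * h (k - x)%R).
Proof.
move=> mh h0.
have g0 : forall x, 0 <= (psi sigma (x - m))%:E * h x.
  by move=> x; apply: mule_ge0 => //; rewrite lee_fin psi_ge0.
rewrite /F (_ : [set: R] = `]-oo, (k / 2)%R[ `|` `[(k / 2)%R, +oo[); last first.
  apply/seteqP; split => x // _ /=; rewrite !in_itv /= andbT.
  by have [xc|xc] := ltP x (k / 2)%R; [left|right].
rewrite ge0_integral_setU //=; last first.
all: try (by apply/disj_setPS => x [] /=; rewrite !in_itv /= andbT => h1 h2; lra).
all: try (by move=> x _; exact: g0).
all: try (by apply: mT; exact: mint).
rewrite (@int_refl k `[(k / 2)%R, +oo[) //; last first.
all: try (exact: mint).
rewrite (_ : (fun x => k - x)%R @^-1` `[(k / 2)%R, +oo[ = `]-oo, (k / 2)%R]); last first.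
  by apply/seteqP; split => x /=; rewrite !in_itv /= !andbT; lra.
rewrite -integral_itv_bndo_bndc; last first.
  by apply: mT; exact: mint2.
rewrite [RHS]ge0_integralD; last 5 first.
- exact: measurable_itv.
- by move=> x _; apply: mule_ge0 => //; rewrite lee_fin psi_ge0.
- by apply: mT; exact: mint.
- by move=> x _; apply: mule_ge0 => //; rewrite lee_fin psi_ge0.
- by apply: mT; exact: mint2.
exact: erefl.
Qed.


Lemma key (A B : R) (u v : \bar R) : (0 <= B)%R -> (B <= A)%R -> 0 <= u -> u <= v ->
  A%:E * u + B%:E * v <= B%:E * u + A%:E * v.
Proof.
move=> B0 BA u0 uv.
have A0 : (0 <= A)%R by apply: le_trans BA.
case: v uv => [v| |] uv; last by move: (le_trans u0 uv).
- case: u u0 uv => [u| |] u0 uv //.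
  rewrite -!EFinM -!EFinD lee_fin; rewrite !lee_fin in u0 uv.
  rewrite -subr_ge0 (_ : B * u + A * v - (A * u + B * v) = (A - B) * (v - u))%R.
    by apply: mulr_ge0; rewrite subr_ge0.
  by ring.
- have [Aeq|Ap] := eqVneq A 0%R.
    rewrite Aeq in BA *.
    have -> : B = 0%R by apply/eqP; rewrite eq_le BA B0.
    by rewrite !mul0e.
  have Agt : (0 < A)%R by rewrite lt_def Ap A0.
  rewrite [X in _ <= _ + X]muleC gt0_mulye ?lte_fin //.
  rewrite addey ?leey //.
  have Bu : 0 <= B%:E * u by rewrite mule_ge0 ?lee_fin.
  by apply/negP => /eqP E; move: Bu; rewrite E.
Qed.

Lemma mint12 (h : R -> \bar R) (m k : R) : measurable_fun setT h ->
  measurable_fun setT (fun x : R => (psi sigma (x - m))%:E * h x +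
     (psi sigma (k - x - m))%:E * h (k - x)%R).
Proof.
move=> mh; apply: emeasurable_funD; [exact: mint | exact: mint2].
Qed.

Lemma F_le (h : R -> \bar R) (m1 m2 : R) : good h -> (m1 <= m2)%R ->
  (0 <= m1 + m2)%R -> F h m1 <= F h m2.
Proof.
move=> [h0 hm] le12 s0.
have mh := good_meas _ hm.
rewrite (F_split h m1 (m1 + m2) mh h0) (F_split h m2 (m1 + m2) mh h0).
apply: ge0_le_integral => //.
all: try (by move=> x _; apply: adde_ge0; apply: mule_ge0 => //; rewrite lee_fin psi_ge0).
all: try (by apply: mT; exact: mint12).
move=> x; rewrite /= in_itv /= => xc.
have -> : (m1 + m2 - x - m1 = - (x - m2))%R by ring.
have -> : (m1 + m2 - x - m2 = - (x - m1))%R by ring.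
rewrite !psi_even.
apply: key => //.
- exact: psi_ge0.
- apply: psi_le; apply: abs_of_sq.
  rewrite -subr_ge0 (_ : (x - m2) ^+ 2 - (x - m1) ^+ 2 = (m2 - m1) * (m1 + m2 - 2 * x))%R;
    last by ring.
  by apply: mulr_ge0; lra.
- apply: hm; apply: abs_of_sq.
  rewrite -subr_ge0 (_ : (m1 + m2 - x) ^+ 2 - x ^+ 2 = (m1 + m2) * (m1 + m2 - 2 * x))%R;
    last by ring.
  by apply: mulr_ge0; lra.
Qed.

Lemma psiE_ge0 v : 0 <= (psi sigma v)%:E.
Proof. rewrite lee_fin; exact: psi_ge0. Qed.

Lemma F_sym (h : R -> \bar R) (m : R) : good h -> F h (- m) = F h m.
Proof.
move=> [h0 hm].
have mh := good_meas _ hm.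
have g0 : forall x, 0 <= (psi sigma (x - - m))%:E * h x.
  by move=> x; apply: mule_ge0; [exact: psiE_ge0 | exact: h0].
rewrite /F (int_refl 0 setT _ measurableT (mint _ _ mh) g0).
rewrite preimage_setT; apply: eq_integral => x _.
rewrite sub0r.
have -> : (- x - - m = - (x - m))%R by ring.
rewrite psi_even; congr (_ * _).
by apply/le_anti/andP; split; apply: hm; rewrite normrN.
Qed.

Lemma F_mono (h : R -> \bar R) (m1 m2 : R) : good h -> (`|m1| <= `|m2|)%R ->
  F h m1 <= F h m2.
Proof.
move=> gh.
wlog m20 : m2 / (0 <= m2)%R.
  move=> W hm; have [m20|m20] := leP 0%R m2; first exact: W.
  rewrite -(F_sym _ m2 gh); apply: W; first by rewrite oppr_ge0 ltW.
  by rewrite normrN.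
rewrite (ger0_norm m20) ler_norml => /andP[a b].
apply: F_le => //; lra.
Qed.

Lemma F_ge0 (h : R -> \bar R) m : (forall x, 0 <= h x) -> 0 <= F h m.
Proof.
move=> h0; apply: integral_ge0 => x _; apply: mule_ge0 => //.
by rewrite lee_fin psi_ge0.
Qed.

Lemma ptrans_ge0 (p01 p10 : R) c c' : (0 <= p01 <= 1)%R -> (0 <= p10 <= 1)%R ->
  (0 <= ptrans p01 p10 c c')%R.
Proof.
by case: c; case: c' => /= /andP[? ?] /andP[? ?]; rewrite ?subr_ge0.
Qed.

Lemma expectE (p01 p10 : R) (W : R -> bool -> \bar R) m c :
  expect sigma p01 p10 W m c =
  (ptrans p01 p10 c false)%:E * F (fun x => W x false) m +
  (ptrans p01 p10 c true)%:E * F (fun x => W x true) m.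
Proof. by []. Qed.

Lemma expect_ge0 (p01 p10 : R) (W : R -> bool -> \bar R) m c :
  (0 <= p01 <= 1)%R -> (0 <= p10 <= 1)%R -> (forall b, good (fun x => W x b)) ->
  0 <= expect sigma p01 p10 W m c.
Proof.
move=> hp hq gW; rewrite expectE.
apply: adde_ge0; apply: mule_ge0; rewrite ?lee_fin ?ptrans_ge0 //;
  apply: F_ge0; by case: (gW false); case: (gW true).
Qed.

Lemma expect_mono (p01 p10 : R) (W : R -> bool -> \bar R) m1 m2 c :
  (0 <= p01 <= 1)%R -> (0 <= p10 <= 1)%R -> (forall b, good (fun x => W x b)) ->
  (`|m1| <= `|m2|)%R ->
  expect sigma p01 p10 W m1 c <= expect sigma p01 p10 W m2 c.
Proof.
move=> hp hq gW hm; rewrite !expectE.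
apply: leeD; (apply: lee_wpmul2l; [rewrite lee_fin; exact: ptrans_ge0 |
  apply: F_mono; [exact: gW | exact: hm]]).
Qed.

Lemma Vstep_good (a gamma lambda p01 p10 : R) (W : R -> bool -> \bar R) c :
  (0 <= gamma)%R -> (0 <= p01 <= 1)%R -> (0 <= p10 <= 1)%R ->
  (forall b, good (fun x => W x b)) ->
  good (fun d => Vstep a sigma gamma lambda p01 p10 W d c).
Proof.
move=> g0 hp hq gW.
have E0 := fun m c => expect_ge0 _ _ _ m c hp hq gW.
have EM := fun m1 m2 c => expect_mono _ _ _ m1 m2 c hp hq gW.
have X0 : forall r : R, 0 <= (expR r)%:E by move=> r; rewrite lee_fin; exact: ltW (expR_gt0 _).
split.
- move=> d; rewrite /Vstep le_min; apply/andP; split.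
  + by rewrite /Q0; apply: mule_ge0; [exact: X0 | exact: E0].
  + by rewrite /Q1; case: c; (apply: mule_ge0; [exact: X0 | exact: E0]).
- move=> d1 d2 hd; rewrite /Vstep; apply: le_min2.
  + rewrite /Q0; apply: lee_pmul; [exact: X0 | exact: E0 | | ].
    * rewrite lee_fin ler_expR; apply: ler_wpM2l; [exact: g0 | exact: sq_of_abs].
    * apply: EM; rewrite !normrM; apply: ler_wpM2l; [exact: normr_ge0 | exact: hd].
  + rewrite /Q1; case: c; first exact: lexx.
    apply: lee_pmul; [exact: X0 | exact: E0 | | ].
    * rewrite lee_fin ler_expR; apply: ler_wpM2l; first exact: g0.
      rewrite lerD2l; exact: sq_of_abs.
    * apply: EM; rewrite !normrM; apply: ler_wpM2l; [exact: normr_ge0 | exact: hd].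
Qed.

End S.

Local Close Scope classical_set_scope.

Theorem lemma3 (R : realType) (a sigma gamma lambda p01 p10 : R) (T : nat) :
  (0 < sigma) -> (0 < gamma) -> (0 < lambda) -> (1 <= T)%N ->
  (0 <= p01 <= 1) -> (0 <= p10 <= 1) ->
  forall (c : bool) (t : nat), (t <= T)%N ->
    (forall d1 d2 : R, `|d1| = `|d2| ->
       V a sigma gamma lambda p01 p10 t d1 c = V a sigma gamma lambda p01 p10 t d2 c) /\
    (forall d1 d2 : R, `|d1| <= `|d2| ->
       (V a sigma gamma lambda p01 p10 t d1 c <= V a sigma gamma lambda p01 p10 t d2 c)%E).
Proof.
move=> s0 g0 l0 T1 hp hq c t _.
have G : forall t c, good R (fun d => V a sigma gamma lambda p01 p10 t d c).
  elim=> [|n IH] b.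
    by split => [x|x y _] /=; rewrite ?lee01.
  by apply: Vstep_good; [exact: ltW g0 | exact: hp | exact: hq | exact: IH].
have [_ hm] := G t c.
split => d1 d2 hd; last exact: hm.
by apply/le_anti/andP; split; apply: hm; rewrite hd.
Qed.
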